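(* Let $X$ be a Euclidean polyhedral space, $U\subset X$ an open subset, $\Pi$ a polyhedral complex on $X$, $f,g$ piecewise affine functions on $U$ defined on $\Pi$, and $c$ a $k$-dimensional weight on $\Pi|_U$. Then $f\cdot(g\cdot c)=g\cdot(f\cdot c)$.
   Context: Polyhedral spaces. Let $X$ be a second countable topological space. A polyhedral structure $\Pi$ on $X$ is a locally finite covering of $X$ by distinct closed subsets $\sigma$ (the polyhedra of $\Pi$), each equipped with a finite-dimensional vector space $M_\sigma$ of continuous real functions on $\sigma$ such that, with $N_\sigma=\operatorname{Hom}(M_\sigma,\mathbb{R})$, the evaluation map $\phi_\sigma\colon\sigma\to N_\sigma$ is a homeomorphism onto a full-dimensional convex polyhedron of an affine hyperplane $H_\sigma\subset N_\sigma$ not containing $0$. Faces of $\sigma$ are the preimages under $\phi_\sigma$ of faces of $\phi_\sigma(\sigma)$ (the empty set is a face). One requires that every face of a polyhedron of $\Pi$ is a polyhedron of $\Pi$ whose function space consists of the restrictions of the functions in $M_\sigma$, and that any two polyhedra intersect in a common face. Via $\phi_\sigma$, each polyhedron inherits an affine structure (its affine functions are the elements of $M_\sigma$), a dimension, faces, facets (codimension-one faces), and a relative interior. $\Pi'$ is a subdivision of $\Pi$ if every polyhedron of $\Pi'$ is contained in a polyhedron of $\Pi$ with affine inclusion; two structures are equivalent if they have a common subdivision. A polyhedral space is $X$ with an equivalence class of polyhedral structures; a polyhedral complex on $X$ is a member of this class. We write $\tau\prec\sigma$ (or $\sigma\succ\tau$) if $\tau$ is a face of $\sigma$. Euclidean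 polyhedral spaces. A Euclidean polyhedral space is a polyhedral space $X$ together with a finite-dimensional real vector space $N_X$ with a Euclidean inner product and a map $\iota\colon X\to N_X$ whose image lies in an affine hyperplane $H_X$ not containing $0$, such that there is a polyhedral complex on $X$ on each of whose polyhedra $\iota$ is injective and affine; only polyhedral complexes with this property are called polyhedral complexes on $X$. For $\sigma\in\Pi$ and a nonempty facet $\tau$ of $\sigma$, $v_{\sigma\setminus\tau}\in N_X$ denotes the unit vector orthogonal to the affine span of $\iota(\tau)$, parallel to the affine span of $\iota(\sigma)$, and pointing from $\iota(\tau)$ towards $\iota(\sigma)$. Weights and products. For $U\subset X$ open, $\Pi|_U$ is the set of polyhedra of $\Pi$ meeting $U$ and $\Pi|_U(k)$ the set of those of dimension $k$. A $k$-dimensional weight on $\Pi|_U$ is a map $c\colon\Pi|_U(k)\to\mathbb{R}$ (extended by $0$ on polyhedra of other dimensions). A piecewise affine function on $U$ defined on $\Pi$ is a function $f\colon U\to\mathbb{R}$ such that for every $\sigma\in\Pi|_U$, $f|_{\sigma\cap U}$ is the restriction of an affine function on $\sigma$; one then chooses linear functions $f_\sigma\colon N_X\to\mathbb{R}$ with $f=f_\sigma\circ\iota$ on $\sigma\cap U$. The product $f\cdot c$ is the $(k-1)$-dimensional weight on $\Pi|_U$ given for $\tau\in\Pi|_U(k-1)$ by $(f\cdot c)(\tau)=-\sum_{\sigma\in\Pi|_U(k),\,\sigma\succ\tau}c(\sigma)\,f_\sigma(v_{\sigma\setminus\tau})$ (this does not depend on the choice of the $f_\sigma$). *)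

(* Defs.v *)
From HB Require Import structures.
From mathcomp Require Import all_boot all_order all_algebra.
From mathcomp Require Import all_classical all_reals all_analysis.
Set Implicit Arguments.
Unset Strict Implicit.
Unset Printing Implicit Defensive.
Import Order.TTheory GRing.Theory Num.Theory numFieldNormedType.Exports.
Local Open Scope ring_scope.
Local Open Scope classical_set_scope.

(** The ambient Euclidean space N_X is modelled as 'rV[R]_n, with a Euclidean
    inner product given by a symmetric positive definite Gram matrix [Gm]. *)
Section Linear.
Context {R : realType} {n : nat}.
Local Notation V := 'rV[R]_n.

Definition ip (Gm : 'M[R]_n) (u v : V) : R := (u *m Gm *m v^T) 0 0.

Definition is_inner_product (Gm : 'M[R]_n) : Prop :=
  Gm^T = Gm /\ forall v : V, v != 0 -> 0 < ip Gm v v.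

(** the linear functional on N_X with coefficient vector a
    (every linear functional N_X -> R is of this form) *)
Definition lin (a v : V) : R := \sum_(i < n) a 0 i * v 0 i.

Definition is_polyhedron (P : set V) : Prop :=
  exists s : seq (V * R), P = [set x | forall p, p \in s -> lin p.1 x <= p.2].

(** faces of a convex polyhedron (the empty set and P itself included) *)
Definition is_face_of (P F : set V) : Prop :=
  exists (a : V) (b : R), (forall x, P x -> lin a x <= b) /\
                         F = P `&` [set x | lin a x = b].

(** linear subspace parallel to the affine span of S *)
Definition dir (S : set V) : set V :=
  [set v | exists s : seq (R * V * V),
     (forall p, p \in s -> S p.1.2 /\ S p.2) /\
     v = \sum_(p <- s) p.1.1 *: (p.1.2 - p.2)].

Definition has_dim (S : set V) (d : nat) : Prop :=
  exists M : 'M[R]_(d, n), row_free M /\ (forall i, dir S (row i M)) /\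
                           (forall v, dir S v -> (v <= M)%MS).
End Linear.

Section Complex.
Context {R : realType} {n : nat} {X : topologicalType}.
Local Notation V := 'rV[R]_n.
Variable iota : X -> V.

Definition faceX (s t : set X) : Prop :=
  exists F, is_face_of (iota @` s) F /\ t = s `&` (iota @^-1` F).

Definition dimX (s : set X) (d : nat) : Prop := has_dim (iota @` s) d.

Definition facet (t s : set X) : Prop :=
  faceX s t /\ t !=set0 /\ exists d, dimX t d /\ dimX s d.+1.

(** Pi is a polyhedral complex on X on each of whose polyhedra iota is
    injective and affine (the function space M_sigma of sigma being the
    pull-backs of linear functionals on N_X). *)
Definition euclidean_polyhedral_complex (Pi : set (set X)) : Prop :=
  [/\ (forall x, exists s, Pi s /\ s x) /\
      (forall x, exists W, [/\ open W, W x &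
                   finite_set [set s | Pi s /\ s `&` W !=set0]]),
      (forall s, Pi s -> closed s),
      (forall s, Pi s ->
         [/\ is_polyhedron (iota @` s),
             (forall x y, s x -> s y -> iota x = iota y -> x = y),
             {within s, continuous iota} &
             exists g : V -> X, (forall x, s x -> g (iota x) = x) /\
                                {within iota @` s, continuous g}]),
      (forall s F, Pi s -> is_face_of (iota @` s) F -> Pi (s `&` (iota @^-1` F))) &
      (forall s t, Pi s -> Pi t -> faceX s (s `&` t) /\ faceX t (s `&` t))].

(** Euclidean polyhedral space structure: X second countable, Gm a Euclidean
    inner product, and iota(X) contained in an affine hyperplane
    {y | lin a y = 1} not containing 0. *)
Definition euclidean_space_data (Gm : 'M[R]_n) : Prop :=
  [/\ @second_countable X, is_inner_product Gm &
      exists a : V, forall x, lin a (iota x) = 1].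

Definition restr (Pi : set (set X)) (U : set X) (s : set X) : Prop :=
  Pi s /\ s `&` U !=set0.

Definition is_normal_vector (Gm : 'M[R]_n) (s t : set X) (v : V) : Prop :=
  [/\ dir (iota @` s) v,
      (forall w, dir (iota @` t) w -> ip Gm v w = 0),
      ip Gm v v = 1 &
      exists x y, [/\ s x, t y & 0 < ip Gm v (iota x - iota y)]].

Definition is_weight (Pi : set (set X)) (U : set X) (k : nat) (c : set X -> R) :=
  forall s, restr Pi U s -> ~ dimX s k -> c s = 0.

Definition piecewise_affine (Pi : set (set X)) (U : set X) (f : X -> R) :=
  forall s, restr Pi U s -> exists a : V, forall x, s x -> U x -> f x = lin a (iota x).

Definition linear_choice (Pi : set (set X)) (U : set X) (f : X -> R) (Fa : set X -> V) :=
  forall s, restr Pi U s -> forall x, s x -> U x -> f x = lin (Fa s) (iota x).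

Definition wprod (Pi : set (set X)) (U : set X) (nu : set X -> set X -> V)
    (k : nat) (Fa : set X -> V) (c : set X -> R) (t : set X) : R :=
  - (\sum_(s \in [set s | [/\ restr Pi U s, dimX s k & facet t s]])
       c s * lin (Fa s) (nu s t)).
End Complex.

(* Main.v *)
Require Import Defs.
From HB Require Import structures.
From mathcomp Require Import all_boot all_order all_algebra finmap.
From mathcomp Require Import all_classical all_reals all_analysis.
From mathcomp Require Import ring lra.
Import Order.TTheory GRing.Theory Num.Theory numFieldNormedType.Exports.
Local Open Scope ring_scope.
Local Open Scope classical_set_scope.
Set Implicit Arguments.
Unset Strict Implicit.
Unset Printing Implicit Defensive.


Section LinAlg.
Context {R : realType} {n : nat}.
Local Notation V := 'rV[R]_n.

Lemma linD (a u v : V) : lin a (u + v) = lin a u + lin a v.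
Proof. rewrite /lin -big_split /=; apply: eq_bigr => i _; by rewrite mxE mulrDr. Qed.
Lemma linZ (a u : V) (r : R) : lin a (r *: u) = r * lin a u.
Proof. rewrite /lin mulr_sumr; apply: eq_bigr => i _; rewrite mxE; ring. Qed.
Lemma lin0 (a : V) : lin a 0 = 0.
Proof. by rewrite -(scale0r (0 : V)) linZ mul0r. Qed.
Lemma linN (a u : V) : lin a (- u) = - lin a u.
Proof. by rewrite -scaleN1r linZ mulN1r. Qed.
Lemma linB (a u v : V) : lin a (u - v) = lin a u - lin a v.
Proof. by rewrite linD linN. Qed.
Lemma linDl (a b u : V) : lin (a + b) u = lin a u + lin b u.
Proof. rewrite /lin -big_split /=; apply: eq_bigr => i _; by rewrite mxE mulrDl. Qed.
Lemma lin_sum (a : V) (I : Type) (r : seq I) (F : I -> V) :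
  lin a (\sum_(i <- r) F i) = \sum_(i <- r) lin a (F i).
Proof.
elim: r => [|x r IH]; first by rewrite !big_nil lin0.
by rewrite !big_cons linD IH.
Qed.
Lemma lin_suml (v : V) (I : Type) (r : seq I) (F : I -> V) :
  lin (\sum_(i <- r) F i) v = \sum_(i <- r) lin (F i) v.
Proof.
elim: r => [|x r IH]; first by rewrite !big_nil /lin big1 // => i _; rewrite mxE mul0r.
by rewrite !big_cons linDl IH.
Qed.

Variable Gm : 'M[R]_n.

Lemma ipD (u v w : V) : ip Gm u (v + w) = ip Gm u v + ip Gm u w.
Proof. by rewrite /ip linearD /= mulmxDr mxE. Qed.
Lemma ipZ (u v : V) (r : R) : ip Gm u (r *: v) = r * ip Gm u v.
Proof. by rewrite /ip linearZ /= -scalemxAr mxE. Qed.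
Lemma ip0 (u : V) : ip Gm u 0 = 0.
Proof. by rewrite -(scale0r (0 : V)) ipZ mul0r. Qed.
Lemma ipN (u v : V) : ip Gm u (- v) = - ip Gm u v.
Proof. by rewrite -scaleN1r ipZ mulN1r. Qed.
Lemma ipB (u v w : V) : ip Gm u (v - w) = ip Gm u v - ip Gm u w.
Proof. by rewrite ipD ipN. Qed.
Lemma ip_sum (u : V) (I : Type) (r : seq I) (F : I -> V) :
  ip Gm u (\sum_(i <- r) F i) = \sum_(i <- r) ip Gm u (F i).
Proof.
elim: r => [|x r IH]; first by rewrite !big_nil ip0.
by rewrite !big_cons ipD IH.
Qed.

Hypothesis Gsym : Gm^T = Gm.
Lemma ipC (u v : V) : ip Gm u v = ip Gm v u.
Proof.
rewrite /ip; transitivity (((u *m Gm *m v^T)^T) 0 0); first by rewrite [RHS]mxE.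
by rewrite !trmx_mul trmxK Gsym mulmxA.
Qed.
Lemma ipDl (u v w : V) : ip Gm (u + v) w = ip Gm u w + ip Gm v w.
Proof. by rewrite ipC ipD !(ipC w). Qed.
Lemma ipZl (u v : V) (r : R) : ip Gm (r *: u) v = r * ip Gm u v.
Proof. by rewrite ipC ipZ ipC. Qed.
Lemma ipNl (u v : V) : ip Gm (- u) v = - ip Gm u v.
Proof. by rewrite ipC ipN ipC. Qed.
Lemma ipBl (u v w : V) : ip Gm (u - v) w = ip Gm u w - ip Gm v w.
Proof. by rewrite ipDl ipNl. Qed.
Lemma ip0l (u : V) : ip Gm 0 u = 0.
Proof. by rewrite ipC ip0. Qed.
End LinAlg.


Section Dir.
Context {R : realType} {n : nat}.
Local Notation V := 'rV[R]_n.
Implicit Types S T : set V.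

Lemma dir_sub S x y : S x -> S y -> dir S (x - y).
Proof.
move=> Sx Sy; exists [:: (1, x, y)]; split; last by rewrite big_seq1 scale1r.
by move=> p; rewrite inE => /eqP ->.
Qed.
Lemma dir0 S : dir S 0.
Proof. by exists [::]; split; [move=> p; rewrite in_nil|rewrite big_nil]. Qed.
Lemma dirD S u v : dir S u -> dir S v -> dir S (u + v).
Proof.
move=> [s1 [h1 ->]] [s2 [h2 ->]]; exists (s1 ++ s2); split; last by rewrite big_cat.
by move=> p; rewrite mem_cat => /orP[/h1|/h2].
Qed.
Lemma dirZ S r u : dir S u -> dir S (r *: u).
Proof.
move=> [s [h ->]]; exists [seq (r * p.1.1, p.1.2, p.2) | p <- s]; split.
  by move=> p /mapP[q /h [? ?] ->].
rewrite big_map scaler_sumr; apply: eq_bigr => p _ /=; by rewrite scalerA.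
Qed.
Lemma dirN S u : dir S u -> dir S (- u).
Proof. by move=> h; rewrite -scaleN1r; apply: dirZ. Qed.
Lemma dirB S u v : dir S u -> dir S v -> dir S (u - v).
Proof. by move=> hu hv; apply: dirD => //; apply: dirN. Qed.
Lemma dir_mono S T : S `<=` T -> dir S `<=` dir T.
Proof. by move=> ST v [s [h ->]]; exists s; split => // p /h [/ST ? /ST ?]. Qed.
Lemma dir_sum S (I : Type) (r : seq I) (F : I -> V) :
  (forall i, dir S (F i)) -> dir S (\sum_(i <- r) F i).
Proof.
move=> h; elim: r => [|x r IH]; first by rewrite big_nil; apply: dir0.
by rewrite big_cons; apply: dirD.
Qed.
Lemma dir_vanish S (h : V -> R) :
  (forall u v, h (u + v) = h u + h v) -> (forall r u, h (r *: u) = r * h u) ->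
  (forall x y, S x -> S y -> h (x - y) = 0) -> forall v, dir S v -> h v = 0.
Proof.
move=> hD hZ hS v [s [hs ->]]; elim: s hs => [|p s IH] hs.
  by rewrite big_nil -(scale0r (0:V)) hZ mul0r.
rewrite big_cons hD hZ IH ?hS ?mulr0 ?addr0 //.
- by case: (hs p (mem_head _ _)).
- by case: (hs p (mem_head _ _)).
by move=> q hq; apply: hs; rewrite inE hq orbT.
Qed.
Lemma dir_lin S a b : (forall x, S x -> lin a x = b) -> forall v, dir S v -> lin a v = 0.
Proof.
move=> h; apply: dir_vanish; [exact: linD|by move=> r u; rewrite linZ|].
by move=> x y Sx Sy; rewrite linB !h // subrr.
Qed.
Lemma dir_ip (Gm : 'M[R]_n) S w : (forall x y, S x -> S y -> ip Gm w (x - y) = 0) ->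
  forall v, dir S v -> ip Gm w v = 0.
Proof. by move=> h; apply: dir_vanish; [exact: ipD|by move=> r u; rewrite ipZ|]. Qed.

Lemma dir_rows S d (M : 'M[R]_(d, n)) : (forall i, dir S (row i M)) ->
  forall v, (v <= M)%MS -> dir S v.
Proof.
move=> hM v /submxP [D ->]; rewrite mulmx_sum_row; apply: dir_sum => i.
exact: dirZ.
Qed.

Lemma has_dimP S d : has_dim S d -> exists M : 'M[R]_(d, n), row_free M /\
  forall v, dir S v <-> (v <= M)%MS.
Proof.
move=> [M [fM [rM sM]]]; exists M; split => // v; split; first exact: sM.
exact: dir_rows.
Qed.

Lemma has_dim_uniq S d1 d2 : has_dim S d1 -> has_dim S d2 -> d1 = d2.
Proof.
move=> /has_dimP [M1 [f1 h1]] /has_dimP [M2 [f2 h2]].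
have s12 : (M1 <= M2)%MS by apply/row_subP => i; apply/h2/h1; exact: row_sub.
have s21 : (M2 <= M1)%MS by apply/row_subP => i; apply/h1/h2; exact: row_sub.
move: (mxrankS s12) (mxrankS s21).
rewrite (eqP f1) (eqP f2) => a b; apply/eqP; rewrite eqn_leq a b.
done.
Qed.

Variable Gm : 'M[R]_n.
Hypothesis Gip : is_inner_product Gm.
Let Gsym : Gm^T = Gm. Proof. by case: Gip. Qed.
Let Gpos : forall v : V, v != 0 -> 0 < ip Gm v v. Proof. by case: Gip. Qed.

Lemma ip_eq0 (v : V) : ip Gm v v = 0 -> v = 0.
Proof. by move=> h; apply/eqP; apply: contraT => /Gpos; rewrite h ltxx. Qed.

Lemma rowfree_orth S d m (MF : 'M[R]_(d, n)) (E : 'M[R]_(m, n)) :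
  row_free MF -> (forall i, dir S (row i MF)) ->
  (forall i w, dir S w -> ip Gm (row i E) w = 0) ->
  (forall i j, i != j -> ip Gm (row i E) (row j E) = 0) ->
  (forall i, 0 < ip Gm (row i E) (row i E)) -> row_free (col_mx MF E).
Proof.
move=> fMF rMF oE oEE pE; apply: inj_row_free => v.
move=> h0; rewrite -[v]hsubmxK; rewrite -[v]hsubmxK mul_row_col in h0.
set vl := lsubmx v in h0 *; set vr := rsubmx v in h0 *.
have dl : dir S (vl *m MF) by apply: (dir_rows rMF); exact: submxMl.
have vr0 : vr = 0.
  apply/rowP => i; rewrite mxE.
  have := congr1 (ip Gm (row i E)) h0.
  rewrite ipD (oE _ _ dl) add0r ip0 mulmx_sum_row ip_sum (bigD1 i) //= big1.
    rewrite addr0 ipZ => /eqP; rewrite mulf_eq0 => /orP[/eqP hh|/eqP hh]; first by move: hh; rewrite !mxE.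
    by move: (pE i); rewrite hh ltxx.
  by move=> j ji; rewrite ipZ oEE ?mulr0 // eq_sym.
rewrite vr0 mul0mx addr0 in h0.
have vl0 : vl = 0 by apply: (row_free_inj fMF); rewrite h0 mul0mx.
by rewrite vl0 vr0 row_mx0.
Qed.

Lemma dim_decomp S B d m (E : 'M[R]_(m, n)) :
  has_dim S d -> has_dim B (d + m)%N -> dir S `<=` dir B ->
  (forall i, dir B (row i E)) -> (forall i w, dir S w -> ip Gm (row i E) w = 0) ->
  (forall i j, ip Gm (row i E) (row j E) = (i == j)%:R) ->
  forall z, dir B z -> exists zS, dir S zS /\ z = zS + \sum_i ip Gm (row i E) z *: row i E.
Proof.
move=> /has_dimP [MF [fF hF]] /has_dimP [MB [fB hB]] SB rE oE oEE z Bz.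
have fA : row_free (col_mx MF E).
  apply: (rowfree_orth fF _ oE).
  - by move=> i; apply/hF; exact: row_sub.
  - by move=> i j ij; rewrite oEE (negbTE ij).
  - by move=> i; rewrite oEE eqxx ltr01.
have sA : (col_mx MF E <= MB)%MS.
  rewrite col_mx_sub; apply/andP; split; apply/row_subP => i; apply/hB.
    by apply: SB; apply/hF; exact: row_sub.
  exact: rE.
have eA : (col_mx MF E == MB)%MS.
  by rewrite -(mxrank_leqif_eq sA) (eqP fA) (eqP fB).
have : (z <= col_mx MF E)%MS by rewrite (eqmxP eA); apply/hB.
move=> /submxP [D ->]; rewrite -[D]hsubmxK mul_row_col.
exists (lsubmx D *m MF); split; first by apply/hF; exact: submxMl.
congr (_ + _); rewrite mulmx_sum_row; apply: eq_bigr => i _; congr (_ *: _).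
have dl : dir S (lsubmx D *m MF) by apply/hF; exact: submxMl.
rewrite ipD (oE _ _ dl) add0r.
rewrite ip_sum (bigD1 i) //= big1.
  by rewrite addr0 ipZ oEE eqxx mulr1.
by move=> j ji; rewrite ipZ oEE eq_sym (negbTE ji) mulr0.
Qed.

Lemma row0_rV (u : V) : row 0 u = u.
Proof. by apply/rowP => j; rewrite !mxE. Qed.

Lemma dim_decomp1 S B d (u : V) :
  has_dim S d -> has_dim B d.+1 -> dir S `<=` dir B ->
  dir B u -> (forall w, dir S w -> ip Gm u w = 0) -> ip Gm u u = 1 ->
  forall z, dir B z -> exists zS, dir S zS /\ z = zS + ip Gm u z *: u.
Proof.
move=> hS hB SB Bu ou uu z Bz.
have hB' : has_dim B (d + 1)%N by rewrite addn1.
have rowu : forall i : 'I_1, row i u = u by move=> i; rewrite (ord1 i) row0_rV.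
have [] := dim_decomp (E := u) hS hB' SB _ _ _ Bz.
- by move=> i; rewrite rowu.
- by move=> i w; rewrite rowu; apply: ou.
- by move=> i j; rewrite !rowu (ord1 i) (ord1 j) uu.
move=> zS [dz hz]; exists zS; split => //.
by rewrite big_ord1 rowu in hz.
Qed.

Lemma dim_decomp2 S B d (u v : V) :
  has_dim S d -> has_dim B d.+2 -> dir S `<=` dir B ->
  dir B u -> dir B v -> (forall w, dir S w -> ip Gm u w = 0) ->
  (forall w, dir S w -> ip Gm v w = 0) -> ip Gm u u = 1 -> ip Gm v v = 1 ->
  ip Gm u v = 0 ->
  forall z, dir B z -> exists zS, dir S zS /\ z = zS + ip Gm u z *: u + ip Gm v z *: v.
Proof.
move=> hS hB SB Bu Bv ou ov uu vv uv z Bz.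
have hB' : has_dim B (d + 2)%N by rewrite addn2.
pose E : 'M[R]_(1 + 1, n) := col_mx u v.
have r0 : row (lshift 1 0) E = u by rewrite rowKu row0_rV.
have r1 : row (rshift 1 0) E = v by rewrite rowKd row0_rV.
have ci : forall i : 'I_(1 + 1), i = lshift 1 0 \/ i = rshift 1 0.
  by case => [[|[|k]] hi]; [left; apply/val_inj|right; apply/val_inj|].
have rE : forall i, row i E = u \/ row i E = v.
  by move=> i; case: (ci i) => ->; [left|right].
have [] := dim_decomp (E := E) hS hB' SB _ _ _ Bz.
- by move=> i; case: (rE i) => ->.
- by move=> i w; case: (rE i) => ->; [apply: ou|apply: ov].
- move=> i j; case: (ci i) => ->; case: (ci j) => ->;
  rewrite ?r0 ?r1 ?uu ?vv ?uv ?(ipC Gsym v u) ?uv //.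
move=> zS [dz hz]; exists zS; split => //.
by rewrite big_split_ord !big_ord1 r0 r1 addrA in hz.
Qed.


Lemma has_dim_ext T S d (q : V) : has_dim T d -> dir T `<=` dir S -> dir S q ->
  (forall w, dir T w -> ip Gm q w = 0) -> 0 < ip Gm q q ->
  (forall z, dir S z -> exists zT b, dir T zT /\ z = zT + b *: q) -> has_dim S d.+1.
Proof.
move=> /has_dimP [MT [fT hT]] TS Sq oq qq hz.
suff : has_dim S (d + 1)%N by rewrite addn1.
have rowq : forall i : 'I_1, row i q = q by move=> i; rewrite (ord1 i) row0_rV.
have sub1 : (MT <= col_mx MT q)%MS by rewrite -addsmxE addsmxSl.
have sub2 : (q <= col_mx MT q)%MS by rewrite -addsmxE addsmxSr.
have inS : forall v, (v <= col_mx MT q)%MS -> dir S v.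
  move=> v /submxP [D ->]; rewrite -[D]hsubmxK mul_row_col; apply: dirD.
    by apply: TS; apply/hT; exact: submxMl.
  by rewrite mulmx_sum_row big_ord1 rowq; apply: dirZ.
exists (col_mx MT q); split; [|split].
- apply: (rowfree_orth fT).
  + by move=> i; apply/hT; exact: row_sub.
  + by move=> i w; rewrite rowq; apply: oq.
  + by move=> i j; rewrite (ord1 i) (ord1 j) eqxx.
  + by move=> i; rewrite rowq.
- by move=> i; apply: inS; exact: row_sub.
- move=> z /hz [zT [b [dT ->]]]; apply: addmx_sub.
    by apply: submx_trans sub1; apply/hT.
  exact: scalemx_sub.
Qed.
End Dir.


Section Poly.
Context {R : realType} {n : nat}.
Local Notation V := 'rV[R]_n.
Implicit Types S T : set V.

Definition inP (L : seq (V * R)) : set V :=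
  [set x | forall p, p \in L -> lin p.1 x <= p.2].

Lemma local_step (L : seq (V * R)) y w : inP L y ->
  (forall p, p \in L -> lin p.1 y = p.2 -> lin p.1 w <= 0) ->
  exists2 e : R, 0 < e & forall e', 0 < e' <= e -> inP L (y + e' *: w).
Proof.
elim: L => [|p L IH] hy hw.
  by exists 1 => // e' _ p; rewrite in_nil.
have [e0 e0p he0] : exists2 e : R, 0 < e & forall e', 0 < e' <= e -> inP L (y + e' *: w).
  apply: IH => [q hq|q hq]; [apply: hy|apply: hw]; by rewrite inE hq orbT.
have hp : p \in p :: L by rewrite mem_head.
have [e1 e1p he1] : exists2 e : R, 0 < e & forall e', 0 < e' <= e ->
    lin p.1 (y + e' *: w) <= p.2.
  have := hy p hp; rewrite le_eqVlt => /orP[/eqP act|lt].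
    exists 1 => // e' /andP[e'p _]; rewrite linD linZ act.
    have := hw p hp act; nra.
  have [wle|wgt] := lerP (lin p.1 w) 0.
    exists 1 => // e' /andP[e'p _]; rewrite linD linZ; nra.
  exists ((p.2 - lin p.1 y) / lin p.1 w); first by apply: divr_gt0; lra.
  move=> e' /andP[e'p]; rewrite ler_pdivlMr // linD linZ; lra.
exists (Order.min e0 e1); first by rewrite lt_min e0p e1p.
move=> e' /andP[e'p]; rewrite le_min => /andP[h0 h1] q; rewrite inE => /orP[/eqP ->|hq].
  by apply: he1; rewrite e'p h1.
by apply: he0; rewrite ?e'p ?h0.
Qed.

Lemma local (L : seq (V * R)) y w : inP L y ->
  (forall p, p \in L -> lin p.1 y = p.2 -> lin p.1 w <= 0) ->
  exists2 e : R, 0 < e & inP L (y + e *: w).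
Proof.
move=> hy hw; have [e ep he] := local_step hy hw.
by exists e => //; apply: he; rewrite ep lexx.
Qed.

Variable Gm : 'M[R]_n.
Hypothesis Gip : is_inner_product Gm.
Let Gsym : Gm^T = Gm. Proof. by case: Gip. Qed.
Let Gpos : forall v : V, v != 0 -> 0 < ip Gm v v. Proof. by case: Gip. Qed.

Definition normalV S T v := [/\ dir S v, (forall w, dir T w -> ip Gm v w = 0),
  ip Gm v v = 1 & exists x y, [/\ S x, T y & 0 < ip Gm v (x - y)]].

Lemma side B F phi b d v : (forall x, B x -> lin phi x <= b) ->
  F = B `&` [set x | lin phi x = b] -> has_dim F d -> has_dim B d.+1 ->
  normalV B F v -> exists2 k : R, k < 0 &
    forall x y, B x -> F y -> lin phi x - b = k * ip Gm v (x - y).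
Proof.
move=> hphi hF dF dB [Bv ov vv [x0 [y0 [Bx0 Fy0 p0]]]].
have FB : F `<=` B by rewrite hF => x [].
have Fb : forall x, F x -> lin phi x = b by rewrite hF => x [].
have eq : forall x y, B x -> F y -> lin phi x - b = lin phi v * ip Gm v (x - y).
  move=> x y Bx Fy.
  have [w [dw hw]] := dim_decomp1 dF dB (dir_mono FB) Bv ov vv (dir_sub Bx (FB _ Fy)).
  have : lin phi (x - y) = lin phi w + ip Gm v (x - y) * lin phi v.
    by rewrite {1}hw linD linZ.
  rewrite (dir_lin Fb dw) add0r linB (Fb _ Fy) mulrC => ->; done.
exists (lin phi v) => //.
rewrite lt_neqAle; apply/andP; split.
  apply/eqP => k0; have := eq _ _ Bx0 Fy0; rewrite k0 mul0r => /eqP; rewrite subr_eq0 => /eqP h.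
  have Fx0 : F x0 by rewrite hF; split.
  by move: p0; rewrite (ov _ (dir_sub Fx0 Fy0)) ltxx.
have := eq _ _ Bx0 Fy0; have := hphi _ Bx0; nra.
Qed.

Lemma side_ge0 B F phi b d v : (forall x, B x -> lin phi x <= b) ->
  F = B `&` [set x | lin phi x = b] -> has_dim F d -> has_dim B d.+1 ->
  normalV B F v -> forall x y, B x -> F y -> 0 <= ip Gm v (x - y).
Proof.
move=> hphi hF dF dB nv; have [k k0 hk] := side hphi hF dF dB nv.
move=> x y Bx Fy; have := hk _ _ Bx Fy; have := hphi _ Bx; nra.
Qed.
End Poly.


Section Core.
Context {R : realType} {n : nat}.
Local Notation V := 'rV[R]_n.
Implicit Types S T : set V.
Variable Gm : 'M[R]_n.
Hypothesis Gip : is_inner_product Gm.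
Let Gsym : Gm^T = Gm. Proof. by case: Gip. Qed.
Let Gpos : forall v : V, v != 0 -> 0 < ip Gm v v. Proof. by case: Gip. Qed.

Variables (L : seq (V * R)) (P S1 T : set V) (d : nat) (psi phi u1 n1 : V) (c b : R).
Hypothesis hP : P = inP L.
Hypothesis hpsi : forall x, P x -> lin psi x <= c.
Hypothesis hS1 : S1 = P `&` [set x | lin psi x = c].
Hypothesis hphi : forall x, S1 x -> lin phi x <= b.
Hypothesis hT : T = S1 `&` [set x | lin phi x = b].
Hypothesis dT : has_dim T d.
Hypothesis dS1 : has_dim S1 d.+1.
Hypothesis dP : has_dim P d.+2.
Hypothesis nu1 : normalV Gm S1 T u1.
Hypothesis nn1 : normalV Gm P S1 n1.

Let S1P : S1 `<=` P. Proof. by rewrite hS1 => x []. Qed.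
Let TS1 : T `<=` S1. Proof. by rewrite hT => x []. Qed.
Let TP : T `<=` P. Proof. by move=> x /TS1 /S1P. Qed.
Let S1c : forall x, S1 x -> lin psi x = c. Proof. by rewrite hS1 => x []. Qed.
Let Tb : forall x, T x -> lin phi x = b. Proof. by rewrite hT => x []. Qed.

Lemma F1 x y : S1 x -> T y -> 0 <= ip Gm u1 (x - y).
Proof. exact: (side_ge0 hphi hT dT dS1 nu1). Qed.
Lemma F2 x y : P x -> S1 y -> 0 <= ip Gm n1 (x - y).
Proof. exact: (side_ge0 hpsi hS1 dS1 dP nn1). Qed.

Let u1S1 : dir S1 u1. Proof. by case: nu1. Qed.
Let u1T : forall w, dir T w -> ip Gm u1 w = 0. Proof. by case: nu1. Qed.
Let u1u1 : ip Gm u1 u1 = 1. Proof. by case: nu1. Qed.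
Let n1P : dir P n1. Proof. by case: nn1. Qed.
Let n1S1 : forall w, dir S1 w -> ip Gm n1 w = 0. Proof. by case: nn1. Qed.
Let n1n1 : ip Gm n1 n1 = 1. Proof. by case: nn1. Qed.
Let n1T : forall w, dir T w -> ip Gm n1 w = 0.
Proof. by move=> w /(dir_mono TS1) /n1S1. Qed.
Lemma u1n1 : ip Gm u1 n1 = 0.
Proof. by rewrite (ipC Gsym) n1S1. Qed.
Let dTP : dir T `<=` dir P. Proof. exact: dir_mono. Qed.
Let u1P : dir P u1. Proof. exact: (dir_mono S1P). Qed.

Lemma Wdecomp z : dir P z -> exists2 zT, dir T zT &
  z = zT + ip Gm u1 z *: u1 + ip Gm n1 z *: n1.
Proof.
move=> Pz; have [zT [h1 h2]] := dim_decomp2 Gip dT dP dTP u1P n1P u1T n1T u1u1 n1n1 u1n1 Pz.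
by exists zT.
Qed.

Lemma ip_self0 (w : V) : ip Gm w w = 0 -> w = 0.
Proof. exact: ip_eq0. Qed.

Lemma Wperp z : dir P z -> (forall w, dir T w -> ip Gm z w = 0) ->
  z = ip Gm u1 z *: u1 + ip Gm n1 z *: n1.
Proof.
move=> Pz oz; have [zT dzT hz] := Wdecomp Pz.
suff zT0 : zT = 0 by rewrite {1}hz zT0 add0r.
apply: ip_self0.
have e : zT = z - ip Gm u1 z *: u1 - ip Gm n1 z *: n1.
  by rewrite {1}hz addrAC addrK addrK.
rewrite {1}e !(ipBl Gsym) !(ipZl Gsym) (oz _ dzT) (u1T dzT) (n1T dzT); ring.
Qed.


Variable y0 : V.
Hypothesis Ty0 : T y0.

Lemma lin_mid a (x x' : V) : lin a (2^-1 *: (x + x')) = 2^-1 * (lin a x + lin a x').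
Proof. by rewrite linZ linD. Qed.

Lemma T_mid x x' : T x -> T x' -> T (2^-1 *: (x + x')).
Proof.
have PL : forall z, P z -> forall p, p \in L -> lin p.1 z <= p.2 by rewrite hP.
move=> Tx Tx'; have S1x := TS1 Tx; have S1x' := TS1 Tx'.
have Px := S1P S1x; have Px' := S1P S1x'.
rewrite hT; split; last by rewrite /= lin_mid !Tb //; field.
rewrite hS1; split; last by rewrite /= lin_mid !S1c //; field.
rewrite hP /inP /= => p hp; rewrite lin_mid; have := PL _ Px p hp; have := PL _ Px' p hp; lra.
Qed.

Lemma relint : exists y, T y /\ forall p, p \in L ->
  (forall x, T x -> lin p.1 x = p.2) \/ lin p.1 y < p.2.
Proof.
have PL : forall z, P z -> forall p, p \in L -> lin p.1 z <= p.2 by rewrite hP.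
suff : forall L' : seq (V * R), (forall p, p \in L' -> p \in L) -> exists y, T y /\ forall p, p \in L' ->
  (forall x, T x -> lin p.1 x = p.2) \/ lin p.1 y < p.2 by move=> /(_ L); apply.
elim => [|p L' IH] sub.
  by exists y0; split => // p; rewrite in_nil.
have [y [Ty hy]] : exists y, T y /\ forall p, p \in L' ->
    (forall x, T x -> lin p.1 x = p.2) \/ lin p.1 y < p.2.
  by apply: IH => q hq; apply: sub; rewrite inE hq orbT.
have pL : p \in L by apply: sub; rewrite mem_head.
case: (pselect (forall x, T x -> lin p.1 x = p.2)) => [allt|].
  exists y; split => // q; rewrite inE => /orP[/eqP ->|hq]; first by left.
  exact: hy.
move=> /existsNP [x /not_implyP [Tx nx]].
have ltx : lin p.1 x < p.2.
  by rewrite lt_neqAle; apply/andP; split; [apply/eqP|apply: PL (TP Tx) _ pL].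
exists (2^-1 *: (x + y)); split; first exact: T_mid.
move=> q; rewrite inE => /orP[/eqP ->|hq].
  by right; rewrite lin_mid; have := PL _ (TP Ty) p pL; lra.
case: (hy q hq) => [h|h]; first by left.
right; rewrite lin_mid.
have qL : q \in L by apply: sub; rewrite inE hq orbT.
have := PL _ (TP Tx) q qL; lra.
Qed.

Let PL : forall z, P z -> forall p, p \in L -> lin p.1 z <= p.2.
Proof. by rewrite hP. Qed.
Let PinP : forall z, inP L z -> P z. Proof. by rewrite hP. Qed.

Lemma splitv (x y z : V) : x - y = (x - z) + (z - y).
Proof. by rewrite addrA subrK. Qed.

Lemma argmax (T0 : eqType) (l : seq T0) (h : T0 -> R) : l != [::] ->
  exists2 j, j \in l & forall p, p \in l -> h p <= h j.
Proof.
elim: l => [//|x l IH] _.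
have [->|ne] := eqVneq l [::].
  by exists x; rewrite ?mem_head // => p; rewrite inE => /eqP ->.
have [j jl hj] := IH ne.
have [le|lt] := lerP (h x) (h j).
  exists j; first by rewrite inE jl orbT.
  by move=> p; rewrite inE => /orP[/eqP ->|/hj].
exists x; first by rewrite mem_head.
move=> p; rewrite inE => /orP[/eqP ->//|/hj hp]; apply: (le_trans hp); exact: ltW.
Qed.

Lemma sum_eq0_seq (T0 : eqType) (r : seq T0) (Q : pred T0) (F : T0 -> R) :
  (forall i, i \in r -> Q i -> 0 <= F i) -> \sum_(i <- r | Q i) F i = 0 ->
  forall i, i \in r -> Q i -> F i = 0.
Proof.
elim: r => [//|x r IH] hF; rewrite big_cons.
have hr : forall i, i \in r -> Q i -> 0 <= F i by move=> i ir; apply: hF; rewrite inE ir orbT.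
have s0 : 0 <= \sum_(i <- r | Q i) F i.
  by rewrite big_seq_cond; apply: sumr_ge0 => i /andP[ir qi]; apply: hr.
case: ifP => qx.
  have fx := hF x (mem_head _ _) qx => h0.
  have fx0 : F x = 0 by apply/eqP; rewrite eq_le fx andbT -h0 lerDl.
  rewrite fx0 add0r in h0.
  move=> i; rewrite inE => /orP[/eqP -> //|ir]; exact: IH.
move=> h0 i; rewrite inE => /orP[/eqP ->|ir]; first by rewrite qx.
exact: IH.
Qed.

Lemma perp_zero (v zT q : V) (r : R) : dir T zT -> (forall w, dir T w -> ip Gm v w = 0) ->
  (forall w, dir T w -> ip Gm q w = 0) -> v = zT + r *: q -> zT = 0.
Proof.
move=> dzT ov oq hv; apply: ip_self0.
have e : zT = v - r *: q by rewrite hv addrK.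
by rewrite {1}e (ipBl Gsym) (ipZl Gsym) (ov _ dzT) (oq _ dzT) mulr0 subrr.
Qed.

Section WithY.
Variable y : V.
Hypothesis Ty : T y.
Hypothesis yrel : forall p, p \in L ->
  (forall x, T x -> lin p.1 x = p.2) \/ lin p.1 y < p.2.

Let Py : P y. Proof. exact: TP. Qed.
Let S1y : S1 y. Proof. exact: TS1. Qed.

Lemma act_tight p : p \in L -> lin p.1 y = p.2 -> forall x, T x -> lin p.1 x = p.2.
Proof. by move=> pL act; case: (yrel pL) => // ; rewrite act ltxx. Qed.

Lemma act_dirT p : p \in L -> lin p.1 y = p.2 -> forall w, dir T w -> lin p.1 w = 0.
Proof. by move=> pL act; apply: dir_lin; apply: act_tight. Qed.

Lemma act_W p z : p \in L -> lin p.1 y = p.2 -> dir P z ->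
  lin p.1 z = ip Gm u1 z * lin p.1 u1 + ip Gm n1 z * lin p.1 n1.
Proof.
move=> pL act Pz; have [zT dzT hz] := Wdecomp Pz.
by rewrite {1}hz !linD !linZ (act_dirT pL act dzT) add0r.
Qed.

Lemma act_le p x : p \in L -> lin p.1 y = p.2 -> P x -> lin p.1 (x - y) <= 0.
Proof. by move=> pL act Px; rewrite linB act subr_le0; apply: PL. Qed.

Lemma cp_le0 p : p \in L -> lin p.1 y = p.2 -> lin p.1 u1 <= 0.
Proof.
move=> pL act; case: nu1 => _ _ _ [x1 [y1 [S1x1 Ty1 pos]]].
have Pz : dir P (x1 - y) by apply: dir_sub => //; apply: S1P.
have := act_W pL act Pz.
rewrite (n1S1 (dir_sub S1x1 S1y)) mul0r addr0 (splitv _ _ y1) ipD (u1T (dir_sub Ty1 Ty)) addr0.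
rewrite -splitv; have := act_le pL act (S1P S1x1); nra.
Qed.

Lemma wit2 : exists2 x2, P x2 & 0 < ip Gm n1 (x2 - y).
Proof.
case: nn1 => _ _ _ [x2 [y2 [Px2 S1y2 pos]]]; exists x2 => //.
by rewrite (splitv _ _ y2) ipD (n1S1 (dir_sub S1y2 S1y)) addr0.
Qed.

Lemma dp_le0 p : p \in L -> lin p.1 y = p.2 -> lin p.1 u1 = 0 -> lin p.1 n1 <= 0.
Proof.
move=> pL act c0; have [x2 Px2 pos] := wit2.
have := act_W pL act (dir_sub Px2 Py); rewrite c0 mulr0 add0r.
have := act_le pL act Px2; nra.
Qed.

Lemma exists_neg : exists p, [/\ p \in L, lin p.1 y = p.2 & lin p.1 u1 < 0].
Proof.
apply: contrapT => hn.
have hw : forall p, p \in L -> lin p.1 y = p.2 -> lin p.1 (- u1) <= 0.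
  move=> p pL act; rewrite linN oppr_le0.
  have := cp_le0 pL act; rewrite le_eqVlt => /orP[/eqP -> //|lt].
  by exfalso; apply: hn; exists p.
have [e ep he] := local (PL Py) hw.
have Pz := PinP he.
have S1z : S1 (y + e *: - u1).
  rewrite hS1; split => //=; rewrite linD linZ linN (dir_lin S1c u1S1) oppr0 mulr0 addr0.
  exact: S1c.
have := F1 S1z Ty; rewrite addrC addKr ipZ ipN u1u1; lra.
Qed.

Lemma exists_j : exists j, [/\ j \in L, lin j.1 y = j.2, lin j.1 u1 < 0 &
  forall p, p \in L -> lin p.1 y = p.2 ->
    lin p.1 u1 * (- lin j.1 n1 / lin j.1 u1) + lin p.1 n1 <= 0].
Proof.
pose lneg := [seq p <- L | (lin p.1 y == p.2) && (lin p.1 u1 < 0)].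
have ne : lneg != [::].
  have [p [pL act neg]] := exists_neg.
  apply/eqP => e; have : p \in lneg by rewrite mem_filter act eqxx neg pL.
  by rewrite e in_nil.
have [j jl hj] := argmax (fun p : V * R => - lin p.1 n1 / lin p.1 u1) ne.
move: (jl); rewrite mem_filter => /andP[/andP[/eqP actj negj] jL].
exists j; split => // p pL act.
have [cp0|cpneg] := eqVneq (lin p.1 u1) 0.
  by rewrite cp0 mul0r add0r; apply: dp_le0.
have cpn : lin p.1 u1 < 0 by rewrite lt_neqAle cpneg (cp_le0 pL act).
have : p \in lneg by rewrite mem_filter act eqxx cpn pL.
move=> /hj; set xs := (- lin j.1 n1 / lin j.1 u1) => h.
have e : - lin p.1 n1 / lin p.1 u1 * lin p.1 u1 = - lin p.1 n1.
  by rewrite divfK.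
nra.
Qed.

Definition chi := \sum_(p <- L | lin p.1 y == p.2) p.1.
Definition bchi := \sum_(p <- L | lin p.1 y == p.2) p.2.

Lemma lin_chi x : lin chi x = \sum_(p <- L | lin p.1 y == p.2) lin p.1 x.
Proof. by rewrite /chi -big_filter lin_suml big_filter. Qed.

Lemma chi_le x : P x -> lin chi x <= bchi.
Proof.
move=> Px; rewrite lin_chi /bchi big_seq_cond [X in _ <= X]big_seq_cond.
by apply: ler_sum => p /andP[pL _]; apply: PL.
Qed.

Lemma T_chi : T = P `&` [set x | lin chi x = bchi].
Proof.
apply/seteqP; split => x.
  move=> Tx; split; first exact: TP.
  rewrite /= lin_chi /bchi big_seq_cond [RHS]big_seq_cond.
  by apply: eq_bigr => p /andP[pL /eqP act]; apply: act_tight.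
move=> [Px /= hx].
have tight : forall p, p \in L -> lin p.1 y = p.2 -> lin p.1 x = p.2.
  have h0 : \sum_(p <- L | lin p.1 y == p.2) (p.2 - lin p.1 x) = 0.
    by rewrite sumrB -lin_chi hx subrr.
  move=> p pL act; apply/eqP; rewrite eq_sym -subr_eq0; apply/eqP.
  apply: (sum_eq0_seq _ h0) => //; first by move=> q qL _; rewrite subr_ge0; apply: PL.
  by rewrite act.
have hw : forall p, p \in L -> lin p.1 y = p.2 -> lin p.1 (y - x) <= 0.
  by move=> p pL act; rewrite linB act tight // subrr.
have [e ep he] := local (PL Py) hw.
have Pz := PinP he.
have psix : lin psi x = c.
  have := hpsi Pz; have := hpsi Px; rewrite linD linZ linB (S1c S1y); nra.
have S1x : S1 x by rewrite hS1.
have S1z : S1 (y + e *: (y - x)).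
  by rewrite hS1; split => //=; rewrite linD linZ linB (S1c S1y) psix subrr mulr0 addr0.
rewrite hT; split => //=.
have := hphi S1z; have := hphi S1x; rewrite linD linZ linB (Tb Ty); nra.
Qed.

Section WithJ.
Variable j : V * R.
Hypothesis jL : j \in L.
Hypothesis actj : lin j.1 y = j.2.
Hypothesis cjneg : lin j.1 u1 < 0.
Let xs := - lin j.1 n1 / lin j.1 u1.
Hypothesis jmax : forall p, p \in L -> lin p.1 y = p.2 -> lin p.1 u1 * xs + lin p.1 n1 <= 0.

Let q2 := xs *: u1 + n1.
Let S2 := P `&` [set x | lin j.1 x = j.2].

Lemma dj_eq : lin j.1 n1 = - (lin j.1 u1 * xs).
Proof. by rewrite /xs; field; rewrite (lt_eqF cjneg). Qed.

Lemma ipW (a1 b1 a2 b2 : R) :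
  ip Gm (a1 *: u1 + b1 *: n1) (a2 *: u1 + b2 *: n1) = a1 * a2 + b1 * b2.
Proof.
rewrite !(ipDl Gsym) !ipD !(ipZl Gsym) !ipZ u1u1 n1n1 u1n1 (ipC Gsym n1 u1) u1n1.
ring.
Qed.

Lemma q2T w : dir T w -> ip Gm q2 w = 0.
Proof. by move=> dw; rewrite (ipDl Gsym) (ipZl Gsym) (u1T dw) (n1T dw); ring. Qed.

Lemma ip_q2 : ip Gm q2 q2 = xs ^+ 2 + 1.
Proof. by rewrite /q2 -[n1 in X in ip Gm X _]scale1r -[n1 in X in ip Gm _ X]scale1r ipW; ring. Qed.

Lemma q2_pos : 0 < ip Gm q2 q2.
Proof. rewrite ip_q2; have := sqr_ge0 xs; lra. Qed.

Lemma linj_q2 : lin j.1 q2 = 0.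
Proof. by rewrite linD linZ dj_eq; ring. Qed.

Lemma ip_u1 z : ip Gm u1 (xs *: u1 + z *: n1) = xs.
Proof. by rewrite ipD !ipZ u1u1 u1n1; ring. Qed.

Lemma move_q2 : exists2 e : R, 0 < e & P (y + e *: q2).
Proof.
have hw : forall p, p \in L -> lin p.1 y = p.2 -> lin p.1 q2 <= 0.
  by move=> p pL act; rewrite linD linZ mulrC; apply: jmax.
have [e ep he] := local (PL Py) hw.
by exists e => //; apply: PinP.
Qed.

Lemma TS2 : T `<=` S2.
Proof. by move=> x Tx; split; [exact: TP|exact: act_tight]. Qed.
Lemma S2P : S2 `<=` P. Proof. by move=> x []. Qed.
Lemma S2j x : S2 x -> lin j.1 x = j.2. Proof. by case. Qed.

Lemma S2_q2 : dir S2 q2.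
Proof.
have [e ep Pz] := move_q2.
have S2z : S2 (y + e *: q2) by split => //=; rewrite linD linZ linj_q2 mulr0 addr0.
have := dirZ e^-1 (dir_sub S2z (TS2 Ty)).
by rewrite addrC addKr scalerA mulVf ?scale1r // gt_eqF.
Qed.

Lemma S2_decomp z : dir S2 z -> exists2 zT, dir T zT & z = zT + ip Gm n1 z *: q2.
Proof.
move=> dz; have dPz : dir P z by apply: (dir_mono S2P).
have [zT dzT hz] := Wdecomp dPz.
exists zT => //.
have h0 : lin j.1 z = 0 := dir_lin S2j dz.
rewrite (act_W jL actj dPz) dj_eq in h0.
have e : ip Gm u1 z = xs * ip Gm n1 z.
  apply: (mulfI (negbT (lt_eqF cjneg))); apply/eqP; rewrite -subr_eq0 -[X in _ == X]h0; apply/eqP; ring.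
by rewrite {1}hz e /q2 scalerDr scalerA addrA (mulrC xs).
Qed.

Lemma dS2 : has_dim S2 d.+1.
Proof.
apply: (has_dim_ext dT (dir_mono TS2) S2_q2 q2T q2_pos).
move=> z /S2_decomp [zT dzT hz]; by exists zT, (ip Gm n1 z).
Qed.

Lemma S2_ne_S1 : S2 <> S1.
Proof.
move=> e; have [ep' ep Pz] := move_q2.
have S2z : S2 (y + ep' *: q2) by split => //=; rewrite linD linZ linj_q2 mulr0 addr0.
rewrite e in S2z.
have := n1S1 (dir_sub S2z S1y); rewrite addrC addKr ipZ /q2 ipD ipZ (ipC Gsym n1 u1) u1n1 n1n1.
lra.
Qed.

Lemma cone x : P x -> 0 <= ip Gm u1 (x - y) - xs * ip Gm n1 (x - y).
Proof.
move=> Px; have := act_le jL actj Px.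
rewrite (act_W jL actj (dir_sub Px Py)) dj_eq.
set al := ip Gm u1 (x - y); set be := ip Gm n1 (x - y).
have -> : al * lin j.1 u1 + be * - (lin j.1 u1 * xs) = lin j.1 u1 * (al - xs * be) by ring.
move=> h; have := cjneg; set t := al - xs * be in h *; nra.
Qed.

Lemma chi_S2 : (forall x, S2 x -> lin chi x <= bchi) /\ T = S2 `&` [set x | lin chi x = bchi].
Proof.
split; first by move=> x /S2P; apply: chi_le.
rewrite {1}T_chi; apply/seteqP; split => x [Px hx]; split => //.
  by split => //; apply: S2j; apply: TS2; rewrite T_chi.
exact: S2P.
Qed.

Lemma ip_Wq2 (a1 b1 : R) : ip Gm (a1 *: u1 + b1 *: n1) q2 = a1 * xs + b1.
Proof. by rewrite /q2 -[n1 in X in ip Gm _ X]scale1r ipW mulr1. Qed.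

Lemma ident u2 n2 : normalV Gm S2 T u2 -> normalV Gm P S2 n2 ->
  forall a b', lin a n1 * lin b' u1 + lin a n2 * lin b' u2 =
               lin b' n1 * lin a u1 + lin b' n2 * lin a u2.
Proof.
move=> [S2u2 u2T u2u2 [x [y' [S2x Ty' pos]]]] [Pn2 n2S2 n2n2 [x'' [y'' [Px'' S2y'' pos2]]]] a b'.
have [zT dzT hu2] := S2_decomp S2u2.
set la := ip Gm n1 u2 in hu2.
have zT0 := perp_zero dzT u2T q2T hu2; rewrite zT0 add0r in hu2.
have [zT' dzT' hx] := S2_decomp (dir_sub S2x (TS2 Ty')).
set bb := ip Gm n1 (x - y') in hx.
have bb0 : 0 <= bb := F2 (S2P S2x) (TS1 Ty').
have e1 : ip Gm u2 (x - y') = la * (bb * ip Gm q2 q2).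
  by rewrite hu2 hx (ipZl Gsym) ipD ipZ (q2T dzT') add0r.
have qp := q2_pos.
have lapos : 0 < la.
  rewrite e1 in pos; rewrite ltNge; apply/negP => hle.
  have : la * (bb * ip Gm q2 q2) <= 0 by apply: mulr_le0_ge0 => //; apply: mulr_ge0 => //; exact: ltW.
  lra.
have la2 : la ^+ 2 * (xs ^+ 2 + 1) = 1.
  by move: u2u2; rewrite hu2 (ipZl Gsym) ipZ ip_q2 => h; rewrite -[X in _ = X]h; ring.
have n2T : forall w, dir T w -> ip Gm n2 w = 0.
  by move=> w dw; apply: n2S2; apply: (dir_mono TS2).
have hn2 := Wperp Pn2 n2T.
set al := ip Gm u1 n2 in hn2; set be := ip Gm n1 n2 in hn2.
have hbe : be = - (al * xs).
  have := n2S2 _ S2_q2; rewrite hn2 ip_Wq2 => h; lra.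
have e2 : ip Gm n2 (x'' - y'') = al * (ip Gm u1 (x'' - y) - xs * ip Gm n1 (x'' - y)).
  rewrite (splitv _ _ y) ipD (n2S2 _ (dir_sub (TS2 Ty) S2y'')) addr0.
  by rewrite hn2 (ipDl Gsym) !(ipZl Gsym) hbe; ring.
have cn := cone Px''.
have alpos : 0 < al by rewrite e2 in pos2; nra.
have al2 : al ^+ 2 * (xs ^+ 2 + 1) = 1.
  by move: n2n2; rewrite hn2 ipW hbe => h; rewrite -[X in _ = X]h; ring.
have eqa : al = la.
  have h : (al - la) * ((al + la) * (xs ^+ 2 + 1)) = 0.
    have -> : (al - la) * ((al + la) * (xs ^+ 2 + 1)) =
      al ^+ 2 * (xs ^+ 2 + 1) - la ^+ 2 * (xs ^+ 2 + 1) by ring.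
    by rewrite al2 la2 subrr.
  move: h => /eqP; rewrite mulf_eq0 => /orP[/eqP h|]; first lra.
  rewrite mulf_eq0 => /orP[/eqP h|/eqP h]; first lra.
  have := sqr_ge0 xs; lra.
rewrite hn2 hu2 hbe eqa /q2 !(linD, linZ).
apply/eqP; rewrite -subr_eq0; apply/eqP.
set A1 := lin a u1; set A2 := lin a n1; set B1 := lin b' u1; set B2 := lin b' n1.
transitivity ((A2 * B1 - B2 * A1) * (1 - la ^+ 2 * (xs ^+ 2 + 1))); first ring.
by rewrite la2 subrr mulr0.
Qed.

Lemma uniq_face S psi' c' u : (forall x, P x -> lin psi' x <= c') ->
  S = P `&` [set x | lin psi' x = c'] -> T `<=` S -> has_dim S d.+1 ->
  normalV Gm S T u -> S = S1 \/ S = S2.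
Proof.
move=> hpsi' hS TS dS [Su uT uu [x [y' [Sx Ty' pos]]]].
have SP : S `<=` P by rewrite hS => z [].
have Sc : forall z, S z -> lin psi' z = c' by rewrite hS => z [].
have dTS : dir T `<=` dir S := dir_mono TS.
have Sy := TS _ Ty.
have hu := Wperp (dir_mono SP Su) uT.
set al := ip Gm u1 u in hu; set be := ip Gm n1 u in hu.
have [w [dw hxy]] := dim_decomp1 dT dS dTS Su uT uu (dir_sub Sx Sy).
set ga := ip Gm u (x - y) in hxy.
have gapos : 0 < ga by rewrite /ga (splitv _ _ y') ipD (uT _ (dir_sub Ty' Ty)) addr0.
have eu1 : ip Gm u1 (x - y) = ga * al by rewrite hxy ipD (u1T dw) add0r ipZ.
have en1 : ip Gm n1 (x - y) = ga * be by rewrite hxy ipD (n1T dw) add0r ipZ.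
have be0 : 0 <= be.
  have := F2 (SP _ Sx) S1y; rewrite en1 => h; nra.
have t0 : 0 <= al - xs * be.
  have := cone (SP _ Sx); rewrite eu1 en1 => h; nra.
have psiS := dir_lin Sc.
have psiu : lin psi' u = 0 := psiS _ Su.
have psiu1 : lin psi' u1 <= 0.
  have hw : forall p, p \in L -> lin p.1 y = p.2 -> lin p.1 u1 <= 0 by move=> p; apply: cp_le0.
  have [e ep he] := local (PL Py) hw.
  have := hpsi' _ (PinP he); rewrite linD linZ (Sc _ Sy) => h; nra.
have psiq2 : lin psi' q2 <= 0.
  have [e ep he] := move_q2.
  have := hpsi' _ he; rewrite linD linZ (Sc _ Sy) => h; nra.
have hu' : u = (al - xs * be) *: u1 + be *: q2.
  by rewrite {1}hu /q2 scalerDr scalerA scalerBl (mulrC be xs) addrA subrK.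
have key : (al - xs * be) * lin psi' u1 + be * lin psi' q2 = 0.
  by move: psiu; rewrite {1}hu' linD !linZ.
have psiT : forall w, dir T w -> lin psi' w = 0 by move=> w0 /dTS; apply: psiS.
have uu' : al ^+ 2 + be ^+ 2 = 1.
  by move: uu; rewrite {1 2}hu ipW => h; rewrite -[X in _ = X]h; ring.
have [be_eq0|be_ne0] := eqVneq be 0.
  left.
  have al0 : al != 0 by apply/eqP => h; move: uu'; rewrite h be_eq0; lra.
  have psiu1e : lin psi' u1 = 0.
    by move: key; rewrite be_eq0 mul0r addr0 mulr0 subr0 => /eqP; rewrite mulf_eq0 (negbTE al0) => /eqP.
  have psi_u : lin psi u = 0.
    by rewrite hu linD !linZ (dir_lin S1c u1S1) be_eq0; ring.
  apply/seteqP; split => z Sz.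
    have [w0 [dw0 hz]] := dim_decomp1 dT dS dTS Su uT uu (dir_sub Sz Sy).
    rewrite hS1; split; first exact: SP.
    have := congr1 (lin psi) hz; rewrite linB linD linZ psi_u mulr0 addr0.
    rewrite (dir_lin S1c (dir_mono TS1 dw0)) (S1c S1y) => /eqP; rewrite subr_eq0 => /eqP.
    by [].
  have [w0 [dw0 hz]] := dim_decomp1 dT dS1 (dir_mono TS1) u1S1 u1T u1u1 (dir_sub Sz S1y).
  rewrite hS; split; first exact: S1P.
  have := congr1 (lin psi') hz; rewrite linB linD linZ psiu1e mulr0 addr0.
  by rewrite (psiT _ dw0) (Sc _ Sy) => /eqP; rewrite subr_eq0 => /eqP.
have bepos : 0 < be by rewrite lt_neqAle eq_sym be_ne0 be0.
have [t_eq0|t_ne0] := eqVneq (al - xs * be) 0.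
  right.
  have psiq : lin psi' q2 = 0.
    move: key; rewrite t_eq0 mul0r add0r => /eqP; rewrite mulf_eq0 (negbTE be_ne0).
    by move=> /eqP.
  have uq : u = be *: q2 by rewrite hu' t_eq0 scale0r add0r.
  apply/seteqP; split => z Sz.
    have [w0 [dw0 hz]] := dim_decomp1 dT dS dTS Su uT uu (dir_sub Sz Sy).
    split; first exact: SP.
    have := congr1 (lin j.1) hz; rewrite linB linD linZ uq linZ linj_q2 !mulr0 addr0.
    by rewrite (act_dirT jL actj dw0) actj => /eqP; rewrite subr_eq0 => /eqP.
  have [w0 dw0 hz] := S2_decomp (dir_sub Sz (TS2 Ty)).
  rewrite hS; split; first exact: S2P.
  have := congr1 (lin psi') hz; rewrite linB linD linZ psiq mulr0 addr0.
  by rewrite (psiT _ dw0) (Sc _ Sy) => /eqP; rewrite subr_eq0 => /eqP.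
exfalso.
have tpos : 0 < al - xs * be by rewrite lt_neqAle eq_sym t_ne0 t0.
have psiu10 : lin psi' u1 = 0 by nra.
have psiq0 : lin psi' q2 = 0 by nra.
have psin1 : lin psi' n1 = 0.
  by move: psiq0; rewrite linD linZ psiu10 mulr0 add0r.
have SeqP : S = P.
  apply/seteqP; split => // z Pz.
  have [w0 dw0 hz] := Wdecomp (dir_sub Pz Py).
  rewrite hS; split => //=.
  have := congr1 (lin psi') hz; rewrite linB !linD !linZ psiu10 psin1 !mulr0 !addr0.
  by rewrite (psiT _ dw0) (Sc _ Sy) => /eqP; rewrite subr_eq0 => /eqP.
rewrite SeqP in dS.
by move: (has_dim_uniq dS dP) => [] /n_Sn.
Qed.
End WithJ.
End WithY.


Lemma core_main : exists S2 : set V,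
  [/\ (exists psi2 c2, (forall x, P x -> lin psi2 x <= c2) /\
                       S2 = P `&` [set x | lin psi2 x = c2]),
      (exists phi2 b2, (forall x, S2 x -> lin phi2 x <= b2) /\
                       T = S2 `&` [set x | lin phi2 x = b2]),
      has_dim S2 d.+1, S2 <> S1 &
      (forall u2 n2, normalV Gm S2 T u2 -> normalV Gm P S2 n2 -> forall a b',
         lin a n1 * lin b' u1 + lin a n2 * lin b' u2 =
         lin b' n1 * lin a u1 + lin b' n2 * lin a u2) /\
      (forall S psi' c' u, (forall x, P x -> lin psi' x <= c') ->
         S = P `&` [set x | lin psi' x = c'] -> T `<=` S -> has_dim S d.+1 ->
         normalV Gm S T u -> S = S1 \/ S = S2)].
Proof.
have [y [Ty yrel]] := relint.
have [j [jL actj cj jmax]] := exists_j Ty yrel.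
exists (P `&` [set x | lin j.1 x = j.2]); split.
- by exists j.1, j.2; split => // x Px; apply: PL.
- have [h1 h2] := chi_S2 Ty yrel jL actj.
  by exists (chi y), (bchi y).
- exact: (dS2 Ty yrel jL actj cj jmax).
- exact: (S2_ne_S1 Ty actj cj jmax).
- split; first exact: (ident Ty yrel jL actj cj jmax).
  exact: (uniq_face Ty yrel jL actj cj jmax).
Qed.
End Core.
About S2_ne_S1.


Section Agree.
Context {R : realType} {n : nat} {X : topologicalType}.
Local Notation V := 'rV[R]_n.

Lemma agree_core (iota : X -> V) (s U : set X) (H : V -> R) (Ls : seq (V * R)) (g : V -> X) :
  iota @` s = inP Ls -> (forall x, s x -> g (iota x) = x) ->
  {within iota @` s, continuous g} -> open U ->
  (forall u v, H (u + v) = H u + H v) -> (forall r u, H (r *: u) = r * H u) ->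
  (forall x, s x -> U x -> H (iota x) = 0) -> (exists z, s z /\ U z) ->
  forall x, s x -> H (iota x) = 0.
Proof.
move=> hA hg cg oU hD hZ h0 [z [sz Uz]] x sx.
set A := iota @` s in hA cg.
have Az : A (iota z) by exists z.
have Ax : A (iota x) by exists x.
have := (subspace_continuousP _ _).1 cg (iota z) Az.
rewrite /from_subspace hg // => cv.
have : nbhs z U by apply: open_nbhs_nbhs; split.
move=> /cv; rewrite /= nbhs_simpl /= /within /= => /nbhs_ballP [e ep he].
set p := iota x; set z0 := iota z.
set eps := e / (e + `|p - z0|).
have dpos : 0 < e + `|p - z0| by rewrite ltr_wpDr.
have epspos : 0 < eps by apply: divr_gt0.
have eps1 : eps <= 1 by rewrite ler_pdivrMr // mul1r lerDl.
set q := z0 + eps *: (p - z0).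
have Aq : A q.
  rewrite hA => r hr.
  have h1 : lin r.1 z0 <= r.2 by move: Az; rewrite hA => /(_ r hr).
  have h2 : lin r.1 p <= r.2 by move: Ax; rewrite hA => /(_ r hr).
  rewrite /q linD linZ linB; nra.
have Bq : ball z0 e q.
  rewrite -ball_normE /ball_ /= /q opprD addNKr normrN normrZ gtr0_norm //.
  rewrite /eps mulrAC ltr_pdivrMr // ltr_pM2l //.
  by rewrite ltrDr.
have Ugq := he _ Bq Aq.
case: (Aq) => xq sxq exq.
move: Ugq; rewrite -exq /preimage /= hg // => Ugq.
have Hq : H q = 0 by rewrite -exq; apply: h0.
have Hz : H z0 = 0 by apply: h0.
move: Hq; rewrite /q hD hZ.
have -> : p - z0 = p + (-1) *: z0 by rewrite scaleN1r.
rewrite hD hZ Hz mulr0 addr0 add0r => /eqP; rewrite mulf_eq0 (gt_eqF epspos) => /eqP.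
done.
Qed.
End Agree.


Section XLevel.
Context {R : realType} {n : nat} {X : topologicalType}.
Local Notation V := 'rV[R]_n.
Variable iota : X -> V.
Variable Gm : 'M[R]_n.

Lemma img_face (sg s : set X) (F : set V) : F `<=` iota @` sg ->
  s = sg `&` iota @^-1` F -> iota @` s = F.
Proof.
move=> Fsub ->; apply/seteqP; split => v.
  by move=> [x [_ Fx] <-].
move=> Fv; have [x sx ex] := Fsub _ Fv; exists x => //; split => //.
by rewrite /preimage /= ex.
Qed.

Lemma faceX_sub s t : faceX iota s t -> t `<=` s.
Proof. by move=> [F [_ ->]] x []. Qed.

Lemma faceX_img s t : faceX iota s t -> exists psi c,
  (forall x, (iota @` s) x -> lin psi x <= c) /\
  iota @` t = iota @` s `&` [set x | lin psi x = c] /\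
  t = s `&` iota @^-1` (iota @` t).
Proof.
move=> [F [[psi [c [hle hF]]] ht]].
have FS : F `<=` iota @` s by rewrite hF => x [].
have e := img_face FS ht.
exists psi, c; split; [exact: hle | split; by rewrite e].
Qed.

Lemma normal_conv s t v : is_normal_vector iota Gm s t v ->
  normalV Gm (iota @` s) (iota @` t) v.
Proof.
move=> [h1 h2 h3 [x [y [sx ty p]]]]; split => //.
exists (iota x), (iota y). split. exists x => //. exists y => //. exact: p.
Qed.

Lemma dimX_uniq s d1 d2 : dimX iota s d1 -> dimX iota s d2 -> d1 = d2.
Proof. exact: has_dim_uniq. Qed.

Variable nu : set X -> set X -> V.
Variable Pi : set (set X).
Hypothesis Gip : is_inner_product Gm.
Hypothesis hC : euclidean_polyhedral_complex iota Pi.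
Hypothesis hnu : forall s t, Pi s -> Pi t -> facet iota t s ->
  is_normal_vector iota Gm s t (nu s t).

Lemma geomX sg s1 t : Pi sg -> Pi s1 -> Pi t -> facet iota t s1 -> facet iota s1 sg ->
  exists s2, [/\ Pi s2, facet iota t s2, facet iota s2 sg, s2 <> s1 &
    (forall s, Pi s -> facet iota t s -> facet iota s sg -> s = s1 \/ s = s2) /\
    (forall a b, lin a (nu sg s1) * lin b (nu s1 t) + lin a (nu sg s2) * lin b (nu s2 t) =
                 lin b (nu sg s1) * lin a (nu s1 t) + lin b (nu sg s2) * lin a (nu s2 t))].
Proof.
move=> Psg Ps1 Pt fts1 fs1sg.
have [fts1' [tne [d [dt ds1]]]] := fts1.
have [fs1sg' [s1ne [d' [ds1' dsg]]]] := fs1sg.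
have dd : d' = d.+1 := dimX_uniq ds1' ds1.
subst d'.
case: hC => _ _ polyP faceP _.
have [[L hL] inj _ _] := polyP sg Psg.
have [psi [c [hpsi [hS1 es1]]]] := faceX_img fs1sg'.
have [phi [b [hphi [hT et]]]] := faceX_img fts1'.
have nu1 := normal_conv (hnu Ps1 Pt fts1).
have nn1 := normal_conv (hnu Psg Ps1 fs1sg).
have [y0 ty0] := tne.
have Ty0 : (iota @` t) (iota y0) by exists y0.
have [S2 [[psi2 [c2 [hpsi2 hS2]]] [phi2 [b2 [hphi2 hT2]]] dS2 neS2 [ident uniqS]]] :=
  core_main Gip (L := L) hL hpsi hS1 hphi hT dt ds1 dsg nu1 nn1 Ty0.
set s2 := sg `&` iota @^-1` S2.
have S2sub : S2 `<=` iota @` sg by rewrite hS2 => x [].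
have es2 : iota @` s2 = S2 := img_face S2sub erefl.
have Ps2 : Pi s2 by apply: faceP => //; exists psi2, c2.
have tsg : t `<=` sg by move=> x /(faceX_sub fts1') /(faceX_sub fs1sg').
have TS2 : iota @` t `<=` S2 by rewrite hT2 => x [].
have ts2 : t = s2 `&` iota @^-1` (iota @` t).
  apply/seteqP; split => x.
    move=> tx; split; last by exists x.
    by split; [exact: tsg|apply: TS2; exists x].
  move=> [[sgx S2x] [x' tx' e]].
  by rewrite -(inj _ _ (tsg _ tx') sgx e).
have fts2 : faceX iota s2 t.
  exists (iota @` t); split => //; rewrite es2; exists phi2, b2; split => //.
have fs2sg : faceX iota sg s2 by exists S2; split => //; exists psi2, c2.
have s2ne : s2 !=set0 by exists y0; rewrite ts2 in ty0; case: ty0.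
have facet_ts2 : facet iota t s2.
  by split => //; split => //; exists d; split => //; rewrite /dimX es2.
have facet_s2sg : facet iota s2 sg.
  by split => //; split => //; exists d.+1; split => //; rewrite /dimX es2.
exists s2; split => //.
  by move=> e; apply: neS2; rewrite -es2 e.
split.
  move=> s Ps fts fssg.
  have [fssg' [sne [d3 [ds3 dsg3]]]] := fssg.
  have d3e : d3 = d.+1 by have := dimX_uniq dsg3 dsg => -[].
  subst d3.
  have [psi' [c' [hpsi' [hS' es]]]] := faceX_img fssg'.
  have Ts : iota @` t `<=` iota @` s.
    by move=> v [x tx <-]; exists x => //; apply: (faceX_sub fts.1).
  have nu' := normal_conv (hnu Ps Pt fts).
  case: (uniqS _ _ _ _ hpsi' hS' Ts ds3 nu') => e; [left|right].
    by rewrite es e -es1.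
  by rewrite es e.
move=> a b'.
have n2 := normal_conv (hnu Psg Ps2 facet_s2sg).
have u2 := normal_conv (hnu Ps2 Pt facet_ts2).
rewrite es2 in n2 u2.
exact: ident.
Qed.
End XLevel.


Section Sums.
Context {R : realType}.

Lemma fsum_cond (T0 : choiceType) (A D : set T0) (F : T0 -> R) :
  finite_set D -> A `<=` D ->
  \sum_(i \in A) F i = \sum_(i <- fset_set D) (if `[< A i >] then F i else 0).
Proof.
move=> fD AD.
rewrite (eq_fsbigr (fun i => if `[< A i >] then F i else 0)); last first.
  by move=> i; rewrite in_setE => Ai; rewrite asboolT.
rewrite (fsbig_widen A D) //; first exact: fsbig_finite.
by move=> i [Di nAi] /=; case: asboolP.
Qed.

Lemma sum_pair (T0 : eqType) (r : seq T0) (Q : T0 -> Prop) (h : T0 -> R) a b :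
  uniq r -> a \in r -> b \in r -> a != b -> Q a -> Q b ->
  (forall s, Q s -> s = a \/ s = b) ->
  \sum_(s <- r) (if `[< Q s >] then h s else 0) = h a + h b.
Proof.
move=> ur ar br ab Qa Qb hQ.
rewrite (bigD1_seq a) //= asboolT // -big_filter (bigD1_seq b) ?filter_uniq //; last first.
  by rewrite mem_filter eq_sym ab.
rewrite asboolT // big_seq_cond big1 /=; first by rewrite addr0.
move=> s /andP[]; rewrite mem_filter => /andP[sa _] sb.
case: asboolP => // /hQ [e|e]; by [rewrite e eqxx in sa|rewrite e eqxx in sb].
Qed.
End Sums.

Section AgreeX.
Context {R : realType} {n : nat} {X : topologicalType}.
Local Notation V := 'rV[R]_n.

Lemma agreeX (iota : X -> V) Pi U (f : X -> R) Fa s sg :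
  euclidean_polyhedral_complex iota Pi -> open U -> linear_choice iota Pi U f Fa ->
  restr Pi U s -> restr Pi U sg -> s `<=` sg ->
  forall v, dir (iota @` s) v -> lin (Fa s) v = lin (Fa sg) v.
Proof.
move=> hC oU lf rs rsg ssg.
case: hC => _ _ polyP _ _.
have [[Ls hLs] _ _ [g [hg cg]]] := polyP s rs.1.
pose H v := lin (Fa s) v - lin (Fa sg) v.
have hD : forall u v, H (u + v) = H u + H v by move=> u v; rewrite /H !linD; ring.
have hZ : forall r u, H (r *: u) = r * H u by move=> r u; rewrite /H !linZ; ring.
have h0 : forall x, s x -> U x -> H (iota x) = 0.
  by move=> x sx Ux; rewrite /H -(lf _ rs x sx Ux) -(lf _ rsg x (ssg _ sx) Ux) subrr.
have ex : exists z, s z /\ U z by case: rs.2 => z [sz Uz]; exists z.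
have hS := agree_core hLs hg cg oU hD hZ h0 ex.
move=> v dv; apply/eqP; rewrite -subr_eq0; apply/eqP.
apply: (dir_vanish hD hZ _ dv).
move=> x y [x' sx' <-] [y' sy' <-].
have -> : iota x' - iota y' = iota x' + (-1) *: iota y' by rewrite scaleN1r.
by rewrite hD hZ !hS // mulr0 addr0.
Qed.
End AgreeX.

Theorem proposition3p10 (R : realType) (n : nat) (X : topologicalType)
  (iota : X -> 'rV[R]_n) (Gm : 'M[R]_n) (Pi : set (set X)) (U : set X)
  (nu : set X -> set X -> 'rV[R]_n)
  (f g : X -> R) (Fa Ga : set X -> 'rV[R]_n) (k : nat) (c : set X -> R) :
  euclidean_space_data iota Gm ->
  euclidean_polyhedral_complex iota Pi ->
  open U ->
  (forall s t, Pi s -> Pi t -> facet iota t s -> is_normal_vector iota Gm s t (nu s t)) ->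
  piecewise_affine iota Pi U f -> piecewise_affine iota Pi U g ->
  linear_choice iota Pi U f Fa -> linear_choice iota Pi U g Ga ->
  is_weight iota Pi U k c ->
  forall t, restr Pi U t ->
    wprod iota Pi U nu k.-1 Fa (wprod iota Pi U nu k Ga c) t =
    wprod iota Pi U nu k.-1 Ga (wprod iota Pi U nu k Fa c) t.
Proof.
move=> [_ Gip _] hC oU hnu _ _ lf lg _ t rt.
have [[_ lfin] _ _ _ _] := hC.
have [Pt [x0 [tx0 Ux0]]] := rt.
have [W [oW Wx0 finW]] := lfin x0.
set Phi := [set s | Pi s /\ s `&` W !=set0] in finW.
set r := fset_set Phi.
set At := [set s | [/\ restr Pi U s, dimX iota s k.-1 & facet iota t s]].
set Bs := fun s => [set sg | [/\ restr Pi U sg, dimX iota sg k & facet iota s sg]].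
have tsub : forall s, facet iota t s -> t `<=` s by move=> s [/faceX_sub].
have AtPhi : At `<=` Phi.
  move=> s [[Ps _] _ fts]; split => //; exists x0; split => //; exact: tsub.
have BsPhi : forall s, At s -> Bs s `<=` Phi.
  move=> s [_ _ fts] sg [[Psg _] _ fssg]; split => //; exists x0; split => //.
  by apply: (faceX_sub fssg.1); apply: tsub.
have expand : forall (Fa Ga : set X -> 'rV[R]_n),
    wprod iota Pi U nu k.-1 Fa (wprod iota Pi U nu k Ga c) t =
    \sum_(s <- r) \sum_(sg <- r) (if `[< At s /\ Bs s sg >] then
       c sg * lin (Ga sg) (nu sg s) * lin (Fa s) (nu s t) else 0).
  move=> F G; rewrite /wprod (fsum_cond _ finW AtPhi) -sumrN.
  apply: eq_bigr => s _; case: asboolP => Ats.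
    rewrite (fsum_cond _ finW (BsPhi _ Ats)) mulNr opprK mulr_suml.
    apply: eq_bigr => sg _; case: asboolP => Bsg.
      by rewrite (asboolT (conj Ats Bsg)).
    by rewrite mul0r; case: asboolP => // -[].
  rewrite oppr0 big1 // => sg _; by case: asboolP => // -[].
rewrite !expand exchange_big [RHS]exchange_big /=.
apply: eq_bigr => sg _.
case: (pselect (exists s, At s /\ Bs s sg)); last first.
  move=> none; transitivity (0 : R); [|symmetry]; apply: big1 => s _;
    case: asboolP => // hh; exfalso; apply: none; by exists s.
move=> [s1 [A1 B1]].
have [rs1 dims1 fts1] := A1; have [rsg dimsg fs1sg] := B1.
have [s2 [Ps2 fts2 fs2sg ne [uq ident]]] := geomX Gip hC hnu rsg.1 rs1.1 Pt fts1 fs1sg.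
have A2 : At s2.
  split.
  - by split => //; exists x0; split => //; apply: (tsub _ fts2).
  - have [_ [_ [d [dt ds1]]]] := fts1; have [_ [_ [d2 [dt2 ds2]]]] := fts2.
    have e1 : d2 = d := dimX_uniq dt2 dt.
    have e2 : k.-1 = d.+1 := dimX_uniq dims1 ds1.
    by rewrite e2 -e1.
  - exact: fts2.
have B2 : Bs s2 sg by split.
have Q : forall s, At s /\ Bs s sg -> s = s1 \/ s = s2.
  by move=> s [[rs _ fts] [_ _ fssg]]; apply: uq => //; case: rs.
have inr : forall s, At s -> s \in r.
  by move=> s As; rewrite /r in_fset_set // in_setE; apply: AtPhi.
have ne' : s1 != s2 by apply/eqP => e; apply: ne; rewrite e.
rewrite !(sum_pair _ (fset_uniq _) (inr _ A1) (inr _ A2) ne' (conj A1 B1) (conj A2 B2) Q).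
have agF : forall s, At s -> Bs s sg -> lin (Fa s) (nu s t) = lin (Fa sg) (nu s t).
  move=> s [rs _ fts] [_ _ fssg]; apply: (agreeX hC oU lf rs rsg (faceX_sub fssg.1)).
  by case: (hnu _ _ rs.1 Pt fts).
have agG : forall s, At s -> Bs s sg -> lin (Ga s) (nu s t) = lin (Ga sg) (nu s t).
  move=> s [rs _ fts] [_ _ fssg]; apply: (agreeX hC oU lg rs rsg (faceX_sub fssg.1)).
  by case: (hnu _ _ rs.1 Pt fts).
rewrite (agF _ A1 B1) (agF _ A2 B2) (agG _ A1 B1) (agG _ A2 B2).
by rewrite -!mulrA -!mulrDr ident.
Qed.
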